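(* Let $\omega_1,\dots,\omega_n$ be non-zero real numbers, let $\tilde{\Delta} = \sum_{i=1}^n \omega_i \partial_{x_i}^2$, and let $k$ be a natural number. Let $q \in C^1(\mathbb{R}^n,\mathbb{R})$ be a scalar function such that there exists $m \le n$ with $q(\mathbf{x}) = f(x_m)\cdot \mathbf{x}_{i\neq m}^{\beta}$ for a multi-index $\beta \in \mathbb{N}_0^{n-1}$ and a function $f$ of the single variable $x_m$. Set $\lambda = \left\lceil \frac{|\beta|-1}{2}\right\rceil$ and $$W(\mathbf{x}) = \omega_m^{-\lambda-k}\, \mathcal{A}_{x_m}^{2\lambda+2k} q(\mathbf{x}) = \omega_m^{-\lambda-k}\, \mathbf{x}_{i\neq m}^{\beta}\, \mathcal{A}_{x_m}^{2\lambda+2k} f(x_m).$$ Then the function $$Q(\mathbf{x}) := \sum_{p=0}^{\lambda} (-1)^p \binom{k+p-1}{p} \omega_m^{\lambda-p}\, \partial_{x_m}^{2\lambda-2p}\, \tilde{\Delta}_{\setminus m}^{p} W(\mathbf{x}) = \sum_{p=0}^{\lambda} (-1)^p \binom{k+p-1}{p} \omega_m^{-p-k}\, \mathcal{A}_{x_m}^{2k+2p}\, \tilde{\Delta}_{\setminus m}^{p} q(\mathbf{x})$$ satisfies $\tilde{\Delta}^k Q = q$. In particular, for $k=1$, $$Q(\mathbf{x}) := \sum_{p=0}^{\lambda} (-1)^p \omega_m^{\lambda-p}\, \partial_{x_m}^{2\lambda-2p}\, \tilde{\Delta}_{\setminus m}^{p} W(\mathbf{x}) = \sum_{p=0}^{\lambda}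 (-1)^p \omega_m^{-p-1}\, \mathcal{A}_{x_m}^{2+2p}\, \tilde{\Delta}_{\setminus m}^{p} q(\mathbf{x})$$ satisfies $\tilde{\Delta} Q = q$.
   Context: $\mathbf{x}_{i\neq m}^{\beta}$ denotes the monomial $\prod_{i\neq m} x_i^{\beta_i}$ in the variables other than $x_m$, and $|\beta|$ is its total degree; $\lceil h\rceil$ is the least integer $\ge h$. The incomplete generalized Laplacian is $\tilde{\Delta}_{\setminus m} f := \sum_{i\neq m}\omega_i\partial_{x_i}^2 f$, with $\tilde{\Delta}_{\setminus m}^p$ its $p$-fold application. The antiderivative with respect to $x_j$ is $\mathcal{A}_{x_j} f(\mathbf{x}) := \int_{x_0}^{x_j} f(x_1,\dots,\xi_j,\dots,x_n)\, d\xi_j$ with a freely chosen lower limit $x_0$, and $\mathcal{A}_{x_j}^p := \mathcal{A}_{x_j}^{p-1}\mathcal{A}_{x_j}$, i.e. $\mathcal{A}_{x_j}^p f(\mathbf{x}) = \frac{1}{(p-1)!}\int_{x_0}^{x_j}(x_j-t_j)^{p-1} f(\dots,t_j,\dots)\,dt_j$. By convention all zeroth powers of these operators are the identity and $\partial_{x_j}^p\mathcal{A}_{x_j}^p f = f$. *)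

(* Defs.v *)
From Stdlib Require Import Reals ZArith.
From Coquelicot Require Import Coquelicot.
From mathcomp Require Import ssreflect ssrfun ssrbool eqtype ssrnat seq fintype bigop binomial.

Set Implicit Arguments.
Unset Strict Implicit.
Unset Printing Implicit Defensive.

Open Scope R_scope.

Definition pt (n : nat) := 'I_n -> R.

Definition upd (n : nat) (x : pt n) (i : 'I_n) (t : R) : pt n :=
  fun j => if j == i then t else x j.

Definition pd (n : nat) (i : 'I_n) (g : pt n -> R) : pt n -> R :=
  fun x => Derive (fun t => g (upd x i t)) (x i).

Definition pdn (n : nat) (i : 'I_n) (p : nat) (g : pt n -> R) : pt n -> R :=
  Nat.iter p (pd i) g.

Definition glap (n : nat) (w : 'I_n -> R) (g : pt n -> R) : pt n -> R :=
  fun x => \big[Rplus/0]_(i < n) (w i * pd i (pd i g) x).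

Definition glap_minus (n : nat) (w : 'I_n -> R) (m : 'I_n) (g : pt n -> R)
  : pt n -> R :=
  fun x => \big[Rplus/0]_(i < n | i != m) (w i * pd i (pd i g) x).

Definition glap_pow (n : nat) (w : 'I_n -> R) (p : nat) (g : pt n -> R) :=
  Nat.iter p (glap w) g.

Definition glap_minus_pow (n : nat) (w : 'I_n -> R) (m : 'I_n) (p : nat)
  (g : pt n -> R) := Nat.iter p (glap_minus w m) g.

Definition antid (n : nat) (x0 : R) (j : 'I_n) (g : pt n -> R) : pt n -> R :=
  fun x => RInt (fun xi => g (upd x j xi)) x0 (x j).

Definition antid_pow (n : nat) (x0 : R) (j : 'I_n) (p : nat) (g : pt n -> R) :=
  Nat.iter p (antid x0 j) g.

Definition antid1 (x0 : R) (f : R -> R) : R -> R := fun s => RInt f x0 s.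
Definition antid1_pow (x0 : R) (p : nat) (f : R -> R) := Nat.iter p (antid1 x0) f.

(* monomial x_{i<>m}^beta ; beta is indexed by 'I_n, entry beta m is unused *)
Definition mono_minus (n : nat) (m : 'I_n) (beta : 'I_n -> nat) (x : pt n) : R :=
  \big[Rmult/1]_(i < n | i != m) (x i ^ beta i).

Definition deg_minus (n : nat) (m : 'I_n) (beta : 'I_n -> nat) : nat :=
  \sum_(i < n | i != m) beta i.

(* ceil((b-1)/2) computed in Z: ceil(a/2) = - floor(-a/2) *)
Definition ceil_half_pred (b : nat) : nat :=
  Z.to_nat (- (Z.div (- (Z.of_nat b - 1)) 2))%Z.

Definition cont_at (n : nat) (g : pt n -> R) (x : pt n) : Prop :=
  forall eps : R, 0 < eps -> exists delta : R, 0 < delta /\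
    forall y : pt n, (forall i, Rabs (y i - x i) < delta) ->
      Rabs (g y - g x) < eps.

Definition C1_Rn (n : nat) (g : pt n -> R) : Prop :=
  forall (i : 'I_n) (x : pt n),
    ex_derive (fun t => g (upd x i t)) (x i) /\ cont_at (pd i g) x.

(* Main.v *)
Require Import Defs.
From HB Require Import structures.
From Stdlib Require Import Reals ZArith Lra Lia FunctionalExtensionality.
From Coquelicot Require Import Coquelicot.
From mathcomp Require Import ssreflect ssrfun ssrbool eqtype ssrnat seq fintype bigop binomial.
From mathcomp Require Import zify.
Open Scope R_scope.
HB.instance Definition _ := Monoid.isComLaw.Build R 0 Rplus (fun a b c => esym (Rplus_assoc a b c)) Rplus_comm Rplus_0_l.
HB.instance Definition _ := Monoid.isComLaw.Build R 1 Rmult (fun a b c => esym (Rmult_assoc a b c)) Rmult_comm Rmult_1_l.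
HB.instance Definition _ := Monoid.isMulLaw.Build R 0 Rmult Rmult_0_l Rmult_0_r.
HB.instance Definition _ := Monoid.isAddLaw.Build R Rmult Rplus Rmult_plus_distr_r Rmult_plus_distr_l.

Section S.
Variable n : nat.
Variable m : 'I_n.

Lemma upd_same (x : pt n) i t : upd x i t i = t.
Proof. by rewrite /upd eqxx. Qed.
Lemma upd_other (x : pt n) i t j : j != i -> upd x i t j = x j.
Proof. by rewrite /upd => /negbTE ->. Qed.
Lemma upd_upd (x : pt n) i s t : upd (upd x i s) i t = upd x i t.
Proof. apply: functional_extensionality => j; rewrite /upd; by case: (j == i). Qed.
Lemma upd_comm (x : pt n) i j s t : i != j -> upd (upd x i s) j t = upd (upd x j t) i s.
Proof.
move=> hij; apply: functional_extensionality => l; rewrite /upd.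
case: (eqVneq l j) => [elj|_]; case: (eqVneq l i) => // eli.
by move: hij; rewrite -eli elj eqxx.
Qed.

Definition indep (g : pt n -> R) := forall x t, g (upd x m t) = g x.

Fixpoint PD (d : nat) (g : pt n -> R) : Prop :=
  match d with
  | 0 => forall x, g x = 0
  | S d => indep g /\ (forall i x, i != m -> ex_derive (fun t => g (upd x i t)) (x i))
           /\ (forall i, i != m -> PD d (pd i g))
  end.

Lemma PD_ext d g h : (forall x, g x = h x) -> PD d g -> PD d h.
Proof. move=> e; have -> : h = g by apply: functional_extensionality => x; rewrite e. done. Qed.

Lemma pd_zero i (g : pt n -> R) : (forall x, g x = 0) -> forall x, pd i g x = 0.
Proof. move=> hg x; rewrite /pd (Derive_ext _ (fun _ => 0)) ?Derive_const //. Qed.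

Lemma PD_zero d g : (forall x, g x = 0) -> PD d g.
Proof.
elim: d g => [|d IH] g hg //=; split; [|split].
- by move=> x t; rewrite !hg.
- move=> i x _; apply: (ex_derive_ext (fun _ => 0)); first by move=> t; rewrite hg.
  apply: ex_derive_const.
- by move=> i _; apply: IH; apply: pd_zero.
Qed.

Lemma PD_indep d g : PD d g -> indep g.
Proof. case: d => [|d] /= h; last by case: h. by move=> x t; rewrite !h. Qed.

Lemma PD_pd d g i : i != m -> PD d g -> PD d.-1 (pd i g).
Proof.
case: d => [|d] /= hi h; first by apply: pd_zero.
by case: h => _ [_ h]; apply: h.
Qed.

Lemma PD_up d d' g : (d <= d')%nat -> PD d g -> PD d' g.
Proof.
elim: d d' g => [|d IH] [|d'] g hd h //.
- exact: (@PD_zero d'.+1).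
- case: h => h1 [h2 h3]; split => //; split => // i hi; apply: IH => //; exact: h3.
Qed.

Lemma PD_plus d g h : PD d g -> PD d h -> PD d (fun x => g x + h x).
Proof.
elim: d g h => [|d IH] g h /=; first by move=> a b x; rewrite a b; ring.
move=> [g1 [g2 g3]] [h1 [h2 h3]]; split; [|split].
- by move=> x t; rewrite g1 h1.
- move=> i x hi; apply: (ex_derive_plus (fun t => g (upd x i t)) (fun t => h (upd x i t))); auto.
- move=> i hi; apply: (@PD_ext _ (fun x => pd i g x + pd i h x)); last by apply: IH; auto.
  move=> x; rewrite /pd (Derive_plus (fun t => g (upd x i t)) (fun t => h (upd x i t))) //; auto.
Qed.

Lemma PD_scal d c g : PD d g -> PD d (fun x => c * g x).
Proof.
elim: d g => [|d IH] g /=; first by move=> a x; rewrite a; ring.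
move=> [g1 [g2 g3]]; split; [|split].
- by move=> x t; rewrite g1.
- move=> i x hi; apply: (ex_derive_scal (fun t => g (upd x i t))); auto.
- move=> i hi; apply: (@PD_ext _ (fun x => c * pd i g x)); last by apply: IH; auto.
  move=> x; by rewrite /pd Derive_scal.
Qed.

Lemma PD_sum d (I : Type) (s : seq I) (P : pred I) (F : I -> pt n -> R) :
  (forall i, P i -> PD d (F i)) -> PD d (fun x => \big[Rplus/0]_(i <- s | P i) F i x).
Proof.
move=> hF; elim: s => [|a s IH].
  by apply: PD_zero => x; rewrite big_nil.
case hP: (P a).
  apply: (@PD_ext _ (fun x => F a x + \big[Rplus/0]_(i <- s | P i) F i x)).
    by move=> x; rewrite big_cons hP.
  by apply: PD_plus => //; apply: hF.
apply: (@PD_ext _ (fun x => \big[Rplus/0]_(i <- s | P i) F i x)) => // x.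
by rewrite big_cons hP.
Qed.

Variable w : 'I_n -> R.

Lemma PD_glap_minus d g : PD d g -> PD (d - 2) (glap_minus w m g).
Proof.
move=> h; rewrite /glap_minus; apply: PD_sum => i hi; apply: PD_scal.
have -> : (d - 2 = d.-1.-1)%nat by lia.
by apply: PD_pd => //; apply: PD_pd.
Qed.

Lemma PD_glap_minus_pow d r g : PD d g -> PD (d - 2 * r) (glap_minus_pow w m r g).
Proof.
elim: r => [|r IH] h; first by rewrite muln0 subn0.
have -> : (d - 2 * r.+1 = (d - 2 * r) - 2)%nat by lia.
by apply: PD_glap_minus; apply: IH.
Qed.


Definition Rest (e : 'I_n -> nat) (i : 'I_n) (x : pt n) :=
  \big[Rmult/1]_(j < n | (j != m) && (j != i)) x j ^ e j.

Lemma mono_indep e : indep (mono_minus m e).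
Proof.
move=> x t; rewrite /mono_minus; apply: eq_bigr => j hj; by rewrite upd_other.
Qed.

Lemma mono_split e i x : i != m -> mono_minus m e x = x i ^ e i * Rest e i x.
Proof. move=> hi; by rewrite /mono_minus (bigD1 i) //=. Qed.

Lemma Rest_upd e i x t : Rest e i (upd x i t) = Rest e i x.
Proof. rewrite /Rest; apply: eq_bigr => j /andP [_ hj]; by rewrite upd_other. Qed.

Lemma deg_split e i : i != m -> deg_minus m e = (e i + \sum_(j < n | (j != m) && (j != i)) e j)%nat.
Proof. move=> hi; by rewrite /deg_minus (bigD1 i) //=. Qed.

Lemma PD_mono d e c : (deg_minus m e < d)%nat -> PD d (fun x => c * mono_minus m e x).
Proof.
elim: d e c => [|d IH] e c //= hd; split; [|split].
- by move=> x t; rewrite mono_indep.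
- move=> i x hi.
  apply: (ex_derive_ext (fun t => c * (t ^ e i * Rest e i x))).
    by move=> t; rewrite (mono_split _ _ _ hi) upd_same Rest_upd.
  auto_derive; done.
- move=> i hi.
  set e' := fun j => if j == i then (e i).-1 else e j.
  have hpd : forall x, pd i (fun x => c * mono_minus m e x) x = (c * INR (e i)) * mono_minus m e' x.
    move=> x; rewrite /pd.
    rewrite (Derive_ext _ (fun t => c * (t ^ e i * Rest e i x))); last first.
      by move=> t; rewrite (mono_split _ _ _ hi) upd_same Rest_upd.
    rewrite (mono_split _ _ _ hi) /e' eqxx.
    have -> : Rest e' i x = Rest e i x.
      rewrite /Rest; apply: eq_bigr => j /andP [_ hj]; by rewrite /e' (negbTE hj).
    apply: is_derive_unique; auto_derive; first done.
    ring.
  apply: (@PD_ext _ (fun x => (c * INR (e i)) * mono_minus m e' x)); first by move=> x; rewrite hpd.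
  case hei: (e i) => [|ei].
    by apply: PD_zero => x; rewrite /= Rmult_0_r Rmult_0_l.
  apply: IH.
  move: hd; rewrite (deg_split _ _ hi) (deg_split _ _ hi) /e' eqxx hei.
  have -> : (\sum_(j < n | (j != m) && (j != i)) (if j == i then ei.+1.-1 else e j) =
             \sum_(j < n | (j != m) && (j != i)) e j)%nat.
    apply: eq_bigr => j /andP [_ hj]; by rewrite (negbTE hj).
  simpl. lia.
Qed.


Variable x0 : R.
Variable f : R -> R.
Hypothesis hf : forall s, ex_derive f s.

Notation F j := (antid1_pow x0 j f).

Lemma F_ok j : (forall s, ex_derive (F j) s) /\ (forall s, is_derive (F j.+1) s (F j s)).
Proof.
have step : forall j, (forall s, ex_derive (F j) s) -> forall s, is_derive (F j.+1) s (F j s).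
  move=> i hi s.
  apply: (is_derive_RInt (F i) (F i.+1) x0 s).
    apply: filter_forall => b; apply: (RInt_correct (F i) x0 b).
    apply: ex_RInt_continuous => z _; apply: ex_derive_continuous; exact: hi.
  apply: ex_derive_continuous; exact: hi.
elim: j => [|j [IH1 IH2]]; first by split => //; apply: step.
have h1 : forall s, ex_derive (F j.+1) s by move=> s; exists (F j s); apply: IH2.
by split => //; apply: step.
Qed.

Lemma F_ex j s : ex_derive (F j) s. Proof. by case: (F_ok j). Qed.
Lemma F_der j s : is_derive (F j.+1) s (F j s). Proof. by case: (F_ok j). Qed.

Lemma pd_other i a (c : pt n -> R) (G : R -> R) : i != m ->
  pd i (fun x => a * c x * G (x m)) = fun x => a * pd i c x * G (x m).
Proof.
move=> hi; apply: functional_extensionality => x; rewrite /pd.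
have hmi : m != i by rewrite eq_sym.
rewrite (Derive_ext _ (fun t => (a * G (x m)) * c (upd x i t))); last first.
  by move=> t; rewrite upd_other //; ring.
rewrite Derive_scal; ring.
Qed.

Lemma pd_m a c j : indep c ->
  pd m (fun x => a * c x * F j.+1 (x m)) = fun x => a * c x * F j (x m).
Proof.
move=> hc; apply: functional_extensionality => x; rewrite /pd.
rewrite (Derive_ext _ (fun t => (a * c x) * F j.+1 t)); last first.
  by move=> t; rewrite upd_same hc.
rewrite Derive_scal (is_derive_unique _ _ _ (F_der j (x m))) //.
Qed.

Lemma pdn_m a c j s : indep c ->
  pdn m s (fun x => a * c x * F (s + j) (x m)) = fun x => a * c x * F j (x m).
Proof.
move=> hc; elim: s j => [|s IH] j; first done.
have -> : forall g, pdn m s.+1 g = pd m (pdn m s g) by [].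
rewrite addSnnS IH; exact: pd_m.
Qed.

Lemma glap_minus_form a c (G : R -> R) :
  glap_minus w m (fun x => a * c x * G (x m)) = fun x => a * glap_minus w m c x * G (x m).
Proof.
apply: functional_extensionality => x; rewrite /glap_minus.
rewrite big_distrr big_distrl /=; apply: eq_bigr => i hi.
rewrite !pd_other //; ring.
Qed.

Lemma glap_minus_pow_form a c (G : R -> R) r :
  glap_minus_pow w m r (fun x => a * c x * G (x m)) =
  fun x => a * glap_minus_pow w m r c x * G (x m).
Proof.
elim: r => [|r IH] //=; rewrite /glap_minus_pow /= in IH *; by rewrite IH glap_minus_form.
Qed.

Lemma antid_form a c j : indep c ->
  antid x0 m (fun x => a * c x * F j (x m)) = fun x => a * c x * F j.+1 (x m).
Proof.
move=> hc; apply: functional_extensionality => x; rewrite /antid.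
rewrite (RInt_ext _ (fun t => scal (a * c x) (F j t))); last first.
  by move=> t _; rewrite upd_same hc.
rewrite RInt_scal //.
apply: ex_RInt_continuous => z _; apply: ex_derive_continuous; exact: F_ex.
Qed.

Lemma antid_pow_form a c J j : indep c ->
  antid_pow x0 m J (fun x => a * c x * F j (x m)) = fun x => a * c x * F (J + j) (x m).
Proof.
move=> hc; elim: J => [|J IH] //=.
rewrite /antid_pow /= in IH *; by rewrite IH antid_form // addSn.
Qed.


Definition acoef (wm : R) (k p : nat) := (-1) ^ p * INR 'C(k + p - 1, p) * / wm ^ (p + k).

Lemma acoef_rec wm k p : wm <> 0 ->
  wm * acoef wm k.+1 p + (if p is p'.+1 then acoef wm k.+1 p' else 0) = acoef wm k p.
Proof.
move=> hw; rewrite /acoef.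
case: p => [|p].
  rewrite !add0n !addn0 !bin0 /=; have := pow_nonzero wm k hw => hk; field; split => //.
have -> : (k.+1 + p.+1 - 1 = (k + p).+1)%nat by lia.
have -> : (k.+1 + p - 1 = (k + p))%nat by lia.
have -> : (k + p.+1 - 1 = (k + p))%nat by lia.
rewrite binS plus_INR.
have -> : (p.+1 + k.+1 = (p + k).+2)%nat by lia.
have -> : (p + k.+1 = (p + k).+1)%nat by lia.
have -> : (p.+1 + k = (p + k).+1)%nat by lia.
have hp : wm ^ (p + k) <> 0 by apply: pow_nonzero.
rewrite /= ; field; split => //.
Qed.

Lemma Derive_big (I : Type) (s : seq I) (P : pred I) (g : I -> R -> R) t :
  (forall p, ex_derive (g p) t) ->
  ex_derive (fun u => \big[Rplus/0]_(p <- s | P p) g p u) t /\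
  Derive (fun u => \big[Rplus/0]_(p <- s | P p) g p u) t = \big[Rplus/0]_(p <- s | P p) Derive (g p) t.
Proof.
move=> hg; elim: s => [|a s [IH1 IH2]].
  rewrite big_nil; split.
    by apply: (ex_derive_ext (fun _ => 0)); [move=> u; rewrite big_nil | apply: ex_derive_const].
  by rewrite (Derive_ext _ (fun _ => 0)) ?Derive_const // => u; rewrite big_nil.
rewrite big_cons; case hP: (P a).
  split.
    apply: (ex_derive_ext (fun u => g a u + \big[Rplus/0]_(p <- s | P p) g p u)).
      by move=> u; rewrite big_cons hP.
    exact: (ex_derive_plus (g a) (fun u => \big[Rplus/0]_(p <- s | P p) g p u)).
  rewrite (Derive_ext _ (fun u => g a u + \big[Rplus/0]_(p <- s | P p) g p u)); last first.
    by move=> u; rewrite big_cons hP.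
  by rewrite (Derive_plus (g a) (fun u => \big[Rplus/0]_(p <- s | P p) g p u)) // IH2.
split.
  by apply: (ex_derive_ext (fun u => \big[Rplus/0]_(p <- s | P p) g p u)) => // u; rewrite big_cons hP.
by rewrite -IH2; apply: Derive_ext => u; rewrite big_cons hP.
Qed.

Lemma pd_sum_gen i N (h : 'I_N -> pt n -> R) :
  (forall p y, ex_derive (fun t => h p (upd y i t)) (y i)) ->
  pd i (fun x => \big[Rplus/0]_(p < N) h p x) = fun x => \big[Rplus/0]_(p < N) pd i (h p) x.
Proof.
move=> hh; apply: functional_extensionality => x; rewrite /pd.
by case: (Derive_big _ (index_enum 'I_N) (fun _ => true) (fun p t => h p (upd x i t)) (x i) (fun p => hh p x)).
Qed.

Lemma pd_sum_other i N (b : 'I_N -> R) (g : 'I_N -> pt n -> R) (G : 'I_N -> R -> R) :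
  i != m -> (forall p y, ex_derive (fun t => g p (upd y i t)) (y i)) ->
  pd i (fun x => \big[Rplus/0]_(p < N) (b p * g p x * G p (x m))) =
  fun x => \big[Rplus/0]_(p < N) (b p * pd i (g p) x * G p (x m)).
Proof.
move=> hi hg; rewrite pd_sum_gen.
  apply: functional_extensionality => x; apply: eq_bigr => p _.
  by rewrite (pd_other _ _ _ _ hi).
move=> p y.
have hmi : m != i by rewrite eq_sym.
apply: (ex_derive_ext (fun t => (b p * G p (y m)) * g p (upd y i t))).
  move=> t; rewrite (@upd_other y i t m hmi) Rmult_assoc (Rmult_comm (G p (y m))) -Rmult_assoc //.
apply: ex_derive_scal; exact: hg.
Qed.

Lemma pd_sum_m N (b : 'I_N -> R) (g : 'I_N -> pt n -> R) (j : 'I_N -> nat) :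
  (forall p, indep (g p)) ->
  pd m (fun x => \big[Rplus/0]_(p < N) (b p * g p x * F (j p).+1 (x m))) =
  fun x => \big[Rplus/0]_(p < N) (b p * g p x * F (j p) (x m)).
Proof.
move=> hg; rewrite pd_sum_gen.
  apply: functional_extensionality => x; apply: eq_bigr => p _.
  by rewrite pd_m.
move=> p y.
apply: (ex_derive_ext (fun t => (b p * g p y) * F (j p).+1 t)).
  by move=> t; rewrite upd_same hg.
apply: ex_derive_scal; exact: F_ex.
Qed.

Variable beta : 'I_n -> nat.
Variable lam : nat.
Hypothesis hlam : ((deg_minus m beta).+1 <= 2 * lam.+1)%nat.
Hypothesis hw : w m <> 0.

Definition cc p := glap_minus_pow w m p (mono_minus m beta).

Lemma cPD p : PD (deg_minus m beta + 4) (cc p).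
Proof.
have h := @PD_glap_minus_pow (deg_minus m beta + 4 + 2 * p) p (mono_minus m beta).
have -> : (deg_minus m beta + 4 = deg_minus m beta + 4 + 2 * p - 2 * p)%nat by lia.
apply: h; apply: (@PD_ext _ (fun x => 1 * mono_minus m beta x)); first by move=> x; ring.
apply: PD_mono; lia.
Qed.

Lemma PD_ex d g i y : i != m -> PD d.+1 g -> ex_derive (fun t => g (upd y i t)) (y i).
Proof. by move=> hi [_ [h _]]; apply: h. Qed.

Lemma cindep p : indep (cc p).
Proof. apply: PD_indep; exact: cPD. Qed.

Lemma c_ex1 p i y : i != m -> ex_derive (fun t => cc p (upd y i t)) (y i).
Proof. move=> hi; apply: (@PD_ex (deg_minus m beta + 3)) => //; rewrite -addnS; exact: cPD. Qed.

Lemma c_ex2 p i y : i != m -> ex_derive (fun t => pd i (cc p) (upd y i t)) (y i).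
Proof.
move=> hi; apply: (@PD_ex (deg_minus m beta + 2)) => //.
have := @PD_pd _ _ _ hi (cPD p).
have -> : ((deg_minus m beta + 4).-1 = (deg_minus m beta + 2).+1)%nat by lia.
done.
Qed.

Lemma c_vanish x : cc lam.+1 x = 0.
Proof.
have h := @PD_glap_minus_pow (deg_minus m beta).+1 lam.+1 (mono_minus m beta).
have h0 : PD ((deg_minus m beta).+1 - 2 * lam.+1) (cc lam.+1).
  apply: h; apply: (@PD_ext _ (fun x => 1 * mono_minus m beta x)); first by move=> y; ring.
  apply: PD_mono; lia.
have e : ((deg_minus m beta).+1 - 2 * lam.+1 = 0)%nat by lia.
rewrite e in h0.
exact: h0.
Qed.

Definition Qk k := fun x =>
  \big[Rplus/0]_(p < lam.+1) (acoef (w m) k p * cc p x * F (2 * k + 2 * p) (x m)).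

Lemma final_comb L (a b u : nat -> R) (wm : R) : u L = 0 ->
  (forall p, wm * a p + (if p is p'.+1 then a p' else 0) = b p) ->
  \big[Rplus/0]_(i < L) (wm * (a i * u i)) + \big[Rplus/0]_(i < L) (a i * u i.+1)
  = \big[Rplus/0]_(i < L) (b i * u i).
Proof.
move=> hu hab.
rewrite -(big_mkord xpredT (fun i => wm * (a i * u i))) -(big_mkord xpredT (fun i => a i * u i.+1)).
rewrite -(big_mkord xpredT (fun i => b i * u i)).
set G := fun p : nat => if p is p'.+1 then a p' * u p else 0.
have HG1 : \big[Rplus/0]_(0 <= p < L) (a p * u p.+1) = \big[Rplus/0]_(0 <= p < L.+1) G p.
  by rewrite big_nat_recl //= Rplus_0_l.
have HG2 : \big[Rplus/0]_(0 <= p < L.+1) G p = \big[Rplus/0]_(0 <= p < L) G p.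
  rewrite big_nat_recr //=; case: L hu HG1 => [|L] hu _ /=; [ring | rewrite hu; ring].
rewrite HG1 HG2 -big_split /=; apply: eq_bigr => p _.
rewrite -hab; case: p => [|p] /=; ring.
Qed.


Lemma glap_Qk k : glap w (Qk k.+1) = Qk k.
Proof.
set L := lam.+1.
have E : Qk k.+1 = fun x => \big[Rplus/0]_(p < L)
    (acoef (w m) k.+1 p * cc p x * F (2*k+2*p).+2 (x m)).
  apply: functional_extensionality => x; apply: eq_bigr => p _.
  by have -> : (2 * k.+1 + 2 * p = (2*k+2*p).+2)%nat by lia.
rewrite E; apply: functional_extensionality => x; rewrite /glap (bigD1 m) //=.
rewrite (@pd_sum_m L (fun p : 'I_L => acoef (w m) k.+1 p) (fun p : 'I_L => cc p)
          (fun p : 'I_L => (2*k+2*p).+1)%nat); last by move=> p; exact: cindep.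
rewrite (@pd_sum_m L (fun p : 'I_L => acoef (w m) k.+1 p) (fun p : 'I_L => cc p)
          (fun p : 'I_L => (2*k+2*p))%nat); last by move=> p; exact: cindep.
have Hi : forall i, i != m -> w i * pd i (pd i (fun x => \big[Rplus/0]_(p < L)
    (acoef (w m) k.+1 p * cc p x * F (2*k+2*p).+2 (x m)))) x =
    \big[Rplus/0]_(p < L) (acoef (w m) k.+1 p * (w i * pd i (pd i (cc p)) x) * F (2*k+2*p).+2 (x m)).
  move=> i hi.
  rewrite (@pd_sum_other i L (fun p : 'I_L => acoef (w m) k.+1 p) (fun p : 'I_L => cc p)
          (fun p : 'I_L => F (2*k+2*p).+2)) //; last by move=> p y; exact: c_ex1.
  rewrite (@pd_sum_other i L (fun p : 'I_L => acoef (w m) k.+1 p) (fun p : 'I_L => pd i (cc p))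
          (fun p : 'I_L => F (2*k+2*p).+2)) //; last by move=> p y; exact: c_ex2.
  rewrite big_distrr /=; apply: eq_bigr => p _; ring.
rewrite (eq_bigr _ Hi) exchange_big /=.
rewrite [X in _ + X](eq_bigr (fun j : 'I_L => acoef (w m) k.+1 j * cc j.+1 x * F (2*k+2*j.+1) (x m))); last first.
  move=> j _; rewrite -big_distrl -big_distrr /=.
  have -> : (2*k + 2*j.+1 = (2*k+2*j).+2)%nat by lia.
  done.
rewrite /Qk big_distrr /=.
have := final_comb L (fun p => acoef (w m) k.+1 p) (fun p => acoef (w m) k p)
  (fun p => cc p x * F (2*k+2*p) (x m)) (w m).
move=> H; rewrite [RHS](eq_bigr (fun i : 'I_L => acoef (w m) k i * (cc i x * F (2*k+2*i) (x m)))); last first.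
  by move=> i _; rewrite Rmult_assoc.
rewrite -H.
- congr (_ + _); apply: eq_bigr => i _ /=; ring.
- by rewrite /L c_vanish Rmult_0_l.
- move=> p; exact: acoef_rec.
Qed.


Lemma glap_pow_Qk k : glap_pow w k (Qk k) = Qk 0.
Proof.
elim: k => [|k IH] //.
rewrite /glap_pow Nat.iter_succ_r glap_Qk; exact: IH.
Qed.

Lemma Qk0 x : Qk 0 x = mono_minus m beta x * f (x m).
Proof.
rewrite /Qk big_ord_recl big1 /=.
  rewrite /acoef /=; field.
move=> i _; rewrite /acoef.
have -> : bump 0 i = i.+1 by first [done | rewrite /bump add1n // | rewrite /bump /= add1n //].
have -> : 'C(0 + i.+1 - 1, i.+1) = 0%nat.
  apply: bin_small; lia.
rewrite /=; ring.
Qed.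

Lemma main_all k (q : pt n -> R) (hq : forall x, q x = f (x m) * mono_minus m beta x) :
  let W := fun x => / (w m ^ (lam + k)) * antid_pow x0 m (2 * lam + 2 * k) q x in
  let Q := fun x =>
    \big[Rplus/0]_(p < lam.+1)
      ((-1) ^ p * INR 'C(k + p - 1, p) * w m ^ (lam - p)
         * pdn m (2 * lam - 2 * p) (glap_minus_pow w m p W) x) in
  (forall x, W x = / (w m ^ (lam + k)) * mono_minus m beta x
                     * antid1_pow x0 (2 * lam + 2 * k) f (x m)) /\
  (forall x, Q x =
    \big[Rplus/0]_(p < lam.+1)
      ((-1) ^ p * INR 'C(k + p - 1, p) * / (w m ^ (p + k))
         * antid_pow x0 m (2 * k + 2 * p) (glap_minus_pow w m p q) x)) /\
  (forall x, glap_pow w k Q x = q x).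
Proof.
have hqf : q = fun x => 1 * cc 0 x * F 0 (x m).
  apply: functional_extensionality => x; rewrite hq /cc /=; ring.
move=> W Q.
have hW : W = fun x => / (w m ^ (lam + k)) * cc 0 x * F (2 * lam + 2 * k) (x m).
  apply: functional_extensionality => x.
  rewrite /W hqf (antid_pow_form _ _ _ _ (cindep 0)) addn0; ring.
have hQ : forall x, Q x = Qk k x.
  move=> x; rewrite /Q /Qk; apply: eq_bigr => p _.
  rewrite hW glap_minus_pow_form.
  have hp : (p <= lam)%nat by case: p => p /=; lia.
  have -> : (2 * lam + 2 * k = (2 * lam - 2 * p) + (2 * k + 2 * p))%nat by lia.
  rewrite (pdn_m _ _ _ _ (cindep p)).
  rewrite /acoef.
  have -> : w m ^ (lam + k) = w m ^ (lam - p) * w m ^ (p + k).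
    rewrite -pow_add; congr (_ ^ _); lia.
  have h1 := pow_nonzero (w m) (lam - p) hw.
  have h2 := pow_nonzero (w m) (p + k) hw.
  rewrite /cc /=; field; split => //.
split; [|split].
- move=> x; rewrite hW /cc /=; ring.
- move=> x; rewrite hQ /Qk; apply: eq_bigr => p _.
  rewrite hqf glap_minus_pow_form (antid_pow_form _ _ _ _ (cindep p)) addn0 /acoef /cc /=; ring.
- move=> x.
  have -> : Q = Qk k by apply: functional_extensionality.
  by rewrite glap_pow_Qk Qk0 hq Rmult_comm.
Qed.

End S.

Lemma ceil_ok b : (b < 2 * (ceil_half_pred b).+1)%nat.
Proof.
rewrite /ceil_half_pred.
have h := Z.div_mod (- (Z.of_nat b - 1)) 2.
have h2 := Z.mod_pos_bound (- (Z.of_nat b - 1)) 2.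
lia.
Qed.


Theorem corollary5p1
  (n : nat) (w : 'I_n -> R) (hw : forall i, w i <> 0)
  (k : nat) (hk : (1 <= k)%nat)
  (m : 'I_n) (beta : 'I_n -> nat) (f : R -> R) (q : pt n -> R)
  (hq1 : C1_Rn q)
  (hq : forall x, q x = f (x m) * mono_minus m beta x)
  (x0 : R) :
  let lam := ceil_half_pred (deg_minus m beta) in
  let W := fun x => / (w m ^ (lam + k)) * antid_pow x0 m (2 * lam + 2 * k) q x in
  let Q := fun x =>
    \big[Rplus/0]_(p < lam.+1)
      ((-1) ^ p * INR 'C(k + p - 1, p) * w m ^ (lam - p)
         * pdn m (2 * lam - 2 * p) (glap_minus_pow w m p W) x) in
  (forall x, W x = / (w m ^ (lam + k)) * mono_minus m beta x
                     * antid1_pow x0 (2 * lam + 2 * k) f (x m)) /\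
  (forall x, Q x =
    \big[Rplus/0]_(p < lam.+1)
      ((-1) ^ p * INR 'C(k + p - 1, p) * / (w m ^ (p + k))
         * antid_pow x0 m (2 * k + 2 * p) (glap_minus_pow w m p q) x)) /\
  (forall x, glap_pow w k Q x = q x).
Proof.
have hf : forall s, ex_derive f s.
  move=> s.
  pose x1 : pt n := fun _ => 1.
  have h := (hq1 m (upd x1 m s)).1.
  rewrite upd_same in h.
  apply: (ex_derive_ext _ _ _ _ h) => t.
  rewrite upd_upd hq upd_same mono_indep.
  have -> : mono_minus m beta x1 = 1.
    rewrite /mono_minus big1 // => i _; rewrite /x1 pow1 //.
  by rewrite Rmult_1_r.
exact (main_all n m w x0 f hf beta (ceil_half_pred (deg_minus m beta)) (ceil_ok (deg_minus m beta)) (hw m) k q hq).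
Qed.
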